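(* For every $n \ge 1$ there exists a directed graph $G$ on $3n$ vertices (with a suitable weight function) such that any path-comparison based algorithm which correctly computes betweenness centrality of all vertices on every input weight function for $G$ must perform at least $n^3/2$ path weight comparisons on some weight function for $G$.
   Context: A path-comparison based algorithm accepts as input a graph $G$ and an edge-weight function; it may perform all standard operations, but the only way it can access the edge weights is by comparing the total weights of two different paths. For a (directed) graph with positive edge weights, $\lambda_{st}$ denotes the number of shortest (minimum total weight) paths from $s$ to $t$, $\lambda_{st}(v)$ the number of those passing through $v$, and the betweenness centrality of $v$ is $BC(v)=\sum_{s,t:\, s\neq v\neq t} \lambda_{st}(v)/\lambda_{st}$ (sum over pairs with $t$ reachable from $s$). *)

(* Defs.v *)
From HB Require Import structures.
From mathcomp Require Import all_boot all_order all_algebra.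
Set Implicit Arguments. Unset Strict Implicit. Unset Printing Implicit Defensive.
Import Order.TTheory GRing.Theory Num.Theory.
Local Open Scope ring_scope.

Definition gpath (V : eqType) (e : rel V) (p : seq V) : bool :=
  if p is x :: q then path e x q && uniq p else false.

Definition gpath_st (V : eqType) (e : rel V) (s t : V) (p : seq V) : bool :=
  [&& gpath e p, head s p == s & last s p == t].

Definition pweight (R : nmodType) (V : Type) (w : V -> V -> R) (p : seq V) : R :=
  \sum_(xy <- zip p (behead p)) w xy.1 xy.2.

Definition pos_weight (R : numDomainType) (V : Type) (e : rel V)
  (w : V -> V -> R) : Prop := forall u v, e u v -> 0 < w u v.

(* all sequences of length at most k over a finite type (each exactly once);
   every simple path of a graph on V occurs in allseqs #|V| *)
Fixpoint allseqs (V : finType) (k : nat) : seq (seq V) :=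
  if k is k'.+1 then [::] :: [seq x :: s | x <- enum V, s <- allseqs V k']
  else [:: [::]].

Section BC.
Variables (R : realFieldType) (V : finType) (e : rel V) (w : V -> V -> R).

Definition candidates : seq (seq V) := allseqs V #|V|.

Definition is_shortest (s t : V) (p : seq V) : bool :=
  gpath_st e s t p &&
  all (fun q => gpath_st e s t q ==> (pweight w p <= pweight w q)) candidates.

Definition nsp (s t : V) : nat := count (is_shortest s t) candidates.

Definition nsp_via (s t v : V) : nat :=
  count (fun p => is_shortest s t p && (v \in p)) candidates.

Definition BC (v : V) : rat :=
  \sum_(s : V | s != v) \sum_(t : V | (t != v) && (0 < nsp s t)%N)
     ((nsp_via s t v)%:R / (nsp s t)%:R).
End BC.

Inductive cmp_res := CmpLt | CmpEq | CmpGt.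

Definition cmpR (R : realFieldType) (x y : R) : cmp_res :=
  if x < y then CmpLt else if x == y then CmpEq else CmpGt.

Inductive step (V : Type) :=
  | Ask of seq V & seq V
  | Answer of (V -> rat).
Arguments Ask {V}. Arguments Answer {V}.

(* A deterministic path-comparison based algorithm on a fixed graph: all
   the algorithm may depend on is the graph (fixed) and the outcomes of the
   comparisons made so far, so it is a strategy mapping the history of
   comparison outcomes to its next step (an arbitrary, possibly infinite,
   adaptive decision tree). *)
Definition strategy (V : Type) := seq cmp_res -> step V.

Fixpoint hist (R : realFieldType) (V : Type) (A : strategy V)
  (w : V -> V -> R) (k : nat) : seq cmp_res :=
  if k is k'.+1 then
    let h := hist A w k' in
    match A h with
    | Ask p q => rcons h (cmpR (pweight w p) (pweight w q))
    | Answer _ => h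
    end
  else [::].

Definition halts_with (R : realFieldType) (V : Type) (A : strategy V)
  (w : V -> V -> R) (k : nat) (b : V -> rat) : Prop :=
  (forall i, (i < k)%N -> exists p q, A (hist A w i) = Ask p q) /\
  A (hist A w k) = Answer b.

Definition compares_paths (R : realFieldType) (V : finType) (e : rel V)
  (A : strategy V) : Prop :=
  forall (w : V -> V -> R), pos_weight e w ->
  forall i p q, A (hist A w i) = Ask p q -> [/\ gpath e p, gpath e q & p != q].

Definition computes_BC (R : realFieldType) (V : finType) (e : rel V)
  (A : strategy V) : Prop :=
  forall (w : V -> V -> R), pos_weight e w ->
  exists k b, halts_with A w k b /\ forall v, b v = BC e w v.

(* Main.v *)
Require Import Defs.
From HB Require Import structures.
From mathcomp Require Import all_boot all_order all_algebra.
Set Implicit Arguments. Unset Strict Implicit. Unset Printing Implicit Defensive.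
Import Order.TTheory GRing.Theory Num.Theory.
From Stdlib Require Import Lia.
Ltac tl := intros;
  repeat match goal with
  | H : is_true (leq _ _) |- _ => move/ssrnat.leP: H => H
  | H : is_true (_ == _ :> nat) |- _ => move/eqP: H => H
  | H : is_true (~~ (_ == _ :> nat)) |- _ => move/eqP: H => H
  end;
  try (apply/ssrnat.leP); try (match goal with |- is_true (_ == _) => apply/eqP end);
  (repeat match goal with
   | H : context [muln _ _] |- _ => lazymatch type of H with context [ordinal _] => fail | _ => revert H end
   | H : context [addn _ _] |- _ => lazymatch type of H with context [ordinal _] => fail | _ => revert H end
   | H : context [subn _ _] |- _ => lazymatch type of H with context [ordinal _] => fail | _ => revert H end
   end);
  rewrite -?multE -?plusE -?minusE; intros; lia.

Definition kd (n : nat) (u : 'I_(3 * n)) : nat := u %/ n.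
Definition ix (n : nat) (u : 'I_(3 * n)) : nat := u %% n.
Definition ee (n : nat) : rel 'I_(3 * n) := fun u v => (kd u < kd v)%N.

Lemma kd_le2 n (u : 'I_(3 * n)) : (kd u <= 2)%N.
Proof.
have Hn : (0 < n)%N by case: n u => [[]|].
by rewrite /kd -ltnS ltn_divLR // mulnC.
Qed.

Lemma ix_lt n (u : 'I_(3 * n)) : (ix u < n)%N.
Proof.
have Hn : (0 < n)%N by case: n u => [[]|].
by rewrite /ix ltn_pmod.
Qed.

Lemma vert_eq n (u v : 'I_(3 * n)) : kd u = kd v -> ix u = ix v -> u = v.
Proof.
move=> H1 H2; apply: val_inj => /=.
by rewrite (divn_eq u n) (divn_eq v n) -/(kd u) -/(kd v) -/(ix u) -/(ix v) H1 H2.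
Qed.

Lemma mkv_proof n (l : 'I_3) (x : 'I_n) : (l * n + x < 3 * n)%N.
Proof.
have := ltn_ord l; have := ltn_ord x => Hx Hl.
have : (l * n <= 2 * n)%N by rewrite leq_mul2r -ltnS Hl orbT.
move=> H; set ln := l * n in H *; tl.
Qed.

Definition mkv n (l : 'I_3) (x : 'I_n) : 'I_(3 * n) := Ordinal (mkv_proof l x).

Lemma kd_mkv n l x : kd (@mkv n l x) = l.
Proof.
have Hn : (0 < n)%N by case: n x => [[]|].
by rewrite /kd /= divnMDl // divn_small ?addn0.
Qed.

Lemma ix_mkv n l x : ix (@mkv n l x) = x.
Proof. by rewrite /ix /= modnMDl modn_small. Qed.

Lemma gpath_cases n (p : seq 'I_(3 * n)) : gpath (@ee n) p ->
  (exists u, p = [:: u]) \/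
  (exists u v, p = [:: u; v] /\ (kd u < kd v)%N) \/
  (exists u v w, p = [:: u; v; w] /\ [/\ kd u = 0, kd v = 1 & kd w = 2]%N).
Proof.
case: p => [|x [|y [|z [|z' q]]]] //=.
- by move=> _; left; exists x.
- move=> /andP [/andP [H _] _]; right; left; by exists x, y.
- move=> /andP [/andP [H1 /andP [H2 _]] _]; right; right; exists x, y, z; split => //.
  rewrite /ee in H1 H2; have := kd_le2 z => H3.
  split; apply/eqP; tl.
- move=> /andP [/andP [H1 /andP [H2 /andP [H3 _]]] _].
  have := kd_le2 z'; rewrite /ee in H1 H2 H3 => H4; exfalso; tl.
Qed.

Lemma divmod_inj d q r q' r' : (r < d)%N -> (r' < d)%N -> q * d + r = q' * d + r' -> q = q' /\ r = r'.
Proof.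
move=> Hr Hr' E.
have Hd : (0 < d)%N by apply: leq_ltn_trans Hr.
have E1 := f_equal (fun x => x %/ d) E; have E2 := f_equal (fun x => x %% d) E.
move: E1 E2 => /=; rewrite !divnMDl // !modnMDl !divn_small // !modn_small // !addn0.
by [].
Qed.

Section W.
End W.

Definition KK (n : nat) := 4 * n ^ 3.
Definition cX n i j := KK n + n ^ 2 * i + j.
Definition cY n j k := KK n + n ^ 3 + n * k + (n - 1 - j).
Definition cZ n i k := 2 * KK n + n ^ 3 + n ^ 2 * i + n * k + (n - 1).
Definition Ff (n : nat) := 3 * 4 ^ n.
Definition Sc (n : nat) := 4 ^ (n + 3).

Definition code n (u v : 'I_(3 * n)) : nat :=
  if (kd u == 0) && (kd v == 1) then cX n (ix u) (ix v)
  else if (kd u == 1) && (kd v == 2) then cY n (ix u) (ix v)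
  else if (kd u == 0) && (kd v == 2) then cZ n (ix u) (ix v)
  else 0.

Definition fine n (u v : 'I_(3 * n)) : nat :=
  if (kd u == 0) && (kd v == 1) then Ff n + 5 * 4 ^ (ix v)
  else if (kd u == 1) && (kd v == 2) then Ff n
  else if (kd u == 0) && (kd v == 2) then 2 * Ff n
  else 0.

Definition sub n (i0 j0 k0 : nat) (u v : 'I_(3 * n)) : nat :=
  if [&& kd u == 0, kd v == 1, ix u == i0 & ix v == j0] then 3 * 4 ^ j0
  else if [&& kd u == 1, kd v == 2, ix u == j0 & ix v == k0] then 3 * 4 ^ j0
  else 0.

Definition wn n (th : 'I_(3 * n) -> 'I_(3 * n) -> nat) u v : nat :=
  Sc n * code u v + (fine u v - th u v).

Definition Wn n th (p : seq 'I_(3 * n)) : nat :=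
  \sum_(xy <- zip p (behead p)) wn th xy.1 xy.2.
Definition Cs n (p : seq 'I_(3 * n)) : nat :=
  \sum_(xy <- zip p (behead p)) code xy.1 xy.2.
Definition Fs n (th : 'I_(3 * n) -> 'I_(3 * n) -> nat) (p : seq 'I_(3 * n)) : nat :=
  \sum_(xy <- zip p (behead p)) (fine xy.1 xy.2 - th xy.1 xy.2).

Lemma Wn_split n th (p : seq 'I_(3 * n)) : Wn th p = Sc n * Cs p + Fs th p.
Proof. by rewrite /Wn /Cs /Fs big_split /= big_distrr. Qed.

Lemma code_same n (u : 'I_(3 * n)) : code u u = 0.
Proof. by rewrite /code; case: (kd u) => [|[|[|?]]]. Qed.

Lemma code3 n (u v w : 'I_(3 * n)) : kd u = 0 -> kd v = 1 -> kd w = 2 ->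
  code u v + code v w = code u w.
Proof.
move=> Hu Hv Hw; rewrite /code Hu Hv Hw /= /cX /cY /cZ.
have := ix_lt v => H; tl.
Qed.

Lemma Cs_gpath n (p : seq 'I_(3 * n)) x : gpath (@ee n) p -> Cs p = code (head x p) (last x p).
Proof.
move=> /gpath_cases [[u ->]|[[u [v [-> _]]]|[u [v [w [-> [Hu Hv Hw]]]]]]];
  rewrite /Cs /= ?big_nil ?big_cons ?big_nil ?code_same ?addn0 //.
exact: code3.
Qed.

Lemma npos n (u : 'I_(3 * n)) : (0 < n)%N.
Proof. by case: n u => [[]|]. Qed.

Lemma A1 n i j : (i < n)%N -> (j < n)%N -> (n ^ 2 * i + j < n ^ 3)%N.
Proof.
move=> Hi Hj.
have H1 : (n ^ 2 * i.+1 <= n ^ 2 * n)%N by rewrite leq_mul2l Hi orbT.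
have H2 : (n <= n ^ 2)%N by rewrite expnS leq_pmull // (leq_ltn_trans _ Hi).
move: H1; rewrite mulnS -expnSr => H1; tl.
Qed.

Lemma A2 n j k : (j < n)%N -> (k < n)%N -> (n * k + (n - 1 - j) < n ^ 2)%N.
Proof.
move=> Hj Hk.
have H1 : (n * k.+1 <= n * n)%N by rewrite leq_mul2l Hk orbT.
move: H1; rewrite mulnS mulnn => H1; tl.
Qed.

Lemma A3 n : (0 < n)%N -> (n ^ 2 <= n ^ 3)%N /\ (1 <= n ^ 2)%N.
Proof.
move=> Hn; split; first by rewrite leq_pexp2l.
by rewrite expn_gt0 Hn.
Qed.

Lemma fine_le n (u v : 'I_(3 * n)) : (fine u v <= 8 * 4 ^ n)%N.
Proof.
have H : (4 ^ ix v <= 4 ^ n)%N by rewrite leq_pexp2l // ltnW // ix_lt.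
rewrite /fine /Ff; case: ifP => _; first by tl.
case: ifP => _; first by tl.
by case: ifP => _; tl.
Qed.

Lemma Fs_lt n th (p : seq 'I_(3 * n)) : gpath (@ee n) p -> (Fs th p < Sc n)%N.
Proof.
have HS : Sc n = 64 * 4 ^ n by rewrite /Sc expnD mulnC.
have H4 : (0 < 4 ^ n)%N by rewrite expn_gt0.
move=> /gpath_cases [[u ->]|[[u [v [-> _]]]|[u [v [w [-> _]]]]]];
  rewrite /Fs /= ?big_nil ?big_cons ?big_nil HS /=.
- by rewrite muln_gt0 expn_gt0.
- have := fine_le u v; set a := fine u v; set b := th u v; tl.
- have := fine_le u v; have := fine_le v w.
  set a := fine u v; set b := th u v; set c := fine v w; set d := th v w. tl.
Qed.

Lemma code_range n (u v : 'I_(3 * n)) :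
  ((kd u == 0) && (kd v == 1) -> KK n <= code u v < KK n + n ^ 3)%N /\
  ((kd u == 1) && (kd v == 2) -> KK n + n ^ 3 <= code u v < 2 * KK n)%N /\
  ((kd u == 0) && (kd v == 2) -> 2 * KK n <= code u v)%N /\
  (~~ (kd u < kd v)%N -> code u v = 0).
Proof.
have Hn := npos u; have [B1 B2] := A3 Hn.
have Hiu := ix_lt u; have Hiv := ix_lt v.
rewrite /code /KK; split; [|split; [|split]].
- move=> /andP [/eqP -> /eqP ->] /=; have := A1 Hiu Hiv; rewrite /cX /KK => ?; apply/andP; split; tl.
- move=> /andP [/eqP -> /eqP ->] /=; have := A2 Hiu Hiv; rewrite /cY /KK => ?; apply/andP; split; tl.
- move=> /andP [/eqP -> /eqP ->] /=; rewrite /cZ /KK; tl.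
- have := kd_le2 u; have := kd_le2 v.
  case: (kd u) => [|[|[|?]]]; case: (kd v) => [|[|[|?]]] //.
Qed.

Lemma kinds3 n (u w : 'I_(3 * n)) : (kd u < kd w)%N ->
  [|| (kd u == 0) && (kd w == 1), (kd u == 1) && (kd w == 2) | (kd u == 0) && (kd w == 2)].
Proof.
have := kd_le2 u; have := kd_le2 w.
by case: (kd u) => [|[|[|?]]]; case: (kd w) => [|[|[|?]]].
Qed.

Lemma codeX n (u w : 'I_(3 * n)) : kd u = 0 -> kd w = 1 -> code u w = cX n (ix u) (ix w).
Proof. by move=> H1 H2; rewrite /code H1 H2. Qed.
Lemma codeY n (u w : 'I_(3 * n)) : kd u = 1 -> kd w = 2 -> code u w = cY n (ix u) (ix w).
Proof. by move=> H1 H2; rewrite /code H1 H2. Qed.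
Lemma codeZ n (u w : 'I_(3 * n)) : kd u = 0 -> kd w = 2 -> code u w = cZ n (ix u) (ix w).
Proof. by move=> H1 H2; rewrite /code H1 H2. Qed.

Lemma kinds3' n (u w : 'I_(3 * n)) : (kd u < kd w)%N ->
  [\/ kd u = 0 /\ kd w = 1, kd u = 1 /\ kd w = 2 | kd u = 0 /\ kd w = 2].
Proof.
have := kd_le2 u; have := kd_le2 w.
case: (kd u) => [|[|[|?]]]; case: (kd w) => [|[|[|?]]] //= *.
all: by [constructor 1 | constructor 2 | constructor 3].
Qed.

Lemma injX n a b a' b' : (0 < n)%N -> (b < n)%N -> (b' < n)%N ->
  n ^ 2 * a + b = n ^ 2 * a' + b' -> a = a' /\ b = b'.
Proof.
move=> Hn Hb Hb' E.
have H2 : (n <= n ^ 2)%N by rewrite expnS leq_pmulr // expn_gt0 Hn.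
apply: (@divmod_inj (n ^ 2)); rewrite 1?mulnC 1?[a' * _]mulnC //.
- exact: leq_trans Hb H2.
- exact: leq_trans Hb' H2.
Qed.

Lemma injY n j k j' k' : (j < n)%N -> (j' < n)%N ->
  n * k + (n - 1 - j) = n * k' + (n - 1 - j') -> j = j' /\ k = k'.
Proof.
move=> Hj Hj' E.
have [e1 e2] : k = k' /\ n - 1 - j = n - 1 - j'.
  apply: (@divmod_inj n); rewrite 1?mulnC 1?[k' * _]mulnC //; tl.
split => //; tl.
Qed.

Lemma injZ n i k i' k' : (0 < n)%N -> (k < n)%N -> (k' < n)%N ->
  n ^ 2 * i + n * k + (n - 1) = n ^ 2 * i' + n * k' + (n - 1) -> i = i' /\ k = k'.
Proof.
move=> Hn Hk Hk' E.
have Y1 : (n * k + (n - 1 - 0) < n ^ 2)%N by apply: A2.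
have Y2 : (n * k' + (n - 1 - 0) < n ^ 2)%N by apply: A2.
have E' : i * n ^ 2 + (n * k + (n - 1)) = i' * n ^ 2 + (n * k' + (n - 1)).
  by rewrite ![_ * n ^ 2]mulnC !addnA.
rewrite subn0 in Y1 Y2.
have [e1 e2] := divmod_inj Y1 Y2 E'.
split => //; apply/eqP; rewrite -(eqn_pmul2l Hn); apply/eqP; tl.
Qed.

Lemma code_inj n (u w u' w' : 'I_(3 * n)) : (kd u < kd w)%N -> (kd u' < kd w')%N ->
  code u w = code u' w' -> u = u' /\ w = w'.
Proof.
move=> H1 H2 E.
have Hn := npos u.
have Hiu := ix_lt u; have Hiw := ix_lt w; have Hiu' := ix_lt u'; have Hiw' := ix_lt w'.
have [B1 B2] := A3 Hn.
have X1 := A1 Hiu Hiw; have X2 := A1 Hiu' Hiw'.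
have Y1 := A2 Hiu Hiw; have Y2 := A2 Hiu' Hiw'.
have fin : kd u = kd u' -> kd w = kd w' -> ix u = ix u' -> ix w = ix w' -> u = u' /\ w = w'.
  by move=> a b c d; split; apply: vert_eq.
case: (kinds3' H1) => [[k1 k2]|[k1 k2]|[k1 k2]];
case: (kinds3' H2) => [[k1' k2']|[k1' k2']|[k1' k2']];
  rewrite ?(codeX k1 k2) ?(codeY k1 k2) ?(codeZ k1 k2)
          ?(codeX k1' k2') ?(codeY k1' k2') ?(codeZ k1' k2') /cX /cY /cZ /KK in E;
  try (by exfalso; move: E; tl).
- have [] : ix u = ix u' /\ ix w = ix w' by apply: (injX Hn Hiw Hiw'); move: E; tl.
  by apply: fin; rewrite ?k1 ?k2 ?k1' ?k2'.
- have [] : ix u = ix u' /\ ix w = ix w' by apply: (injY Hiu Hiu'); move: E; tl.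
  by apply: fin; rewrite ?k1 ?k2 ?k1' ?k2'.
- have [] : ix u = ix u' /\ ix w = ix w' by apply: (injZ Hn Hiw Hiw'); move: E; tl.
  by apply: fin; rewrite ?k1 ?k2 ?k1' ?k2'.
Qed.

Definition l0 : 'I_3 := @Ordinal 3 0 isT.
Definition l1 : 'I_3 := @Ordinal 3 1 isT.
Definition l2 : 'I_3 := @Ordinal 3 2 isT.

Definition tgt n (i0 j0 k0 : 'I_n) : seq 'I_(3 * n) := [:: mkv l0 i0; mkv l1 j0; mkv l2 k0].

Definition zth n : 'I_(3 * n) -> 'I_(3 * n) -> nat := fun _ _ => 0.
Arguments zth : clear implicits.

Definition same_ord (a b c d : nat) := ((a < b) = (c < d))%N /\ ((a == b) = (c == d)).

Lemma so_intro a b c d : ((a < b) -> (c < d))%N -> ((c < d) -> (a < b))%N ->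
  (a = b -> c = d) -> (c = d -> a = b) -> same_ord a b c d.
Proof.
move=> H1 H2 H3 H4; split; first by apply/idP/idP.
by apply/eqP/eqP.
Qed.

Lemma code_pos n (u v : 'I_(3 * n)) : (kd u < kd v)%N -> (0 < code u v)%N.
Proof.
move=> H; have Hn := npos u.
have [R1 [R2 [R3 _]]] := code_range u v.
have HK : (0 < KK n)%N by rewrite /KK muln_gt0 expn_gt0 Hn.
case: (kinds3' H) => [[k1 k2]|[k1 k2]|[k1 k2]].
- by have := R1 (introT andP (conj (introT eqP k1) (introT eqP k2))) => /andP [? ?]; tl.
- by have := R2 (introT andP (conj (introT eqP k1) (introT eqP k2))) => /andP [? ?]; tl.
- by have := R3 (introT andP (conj (introT eqP k1) (introT eqP k2))); tl.
Qed.

Lemma F3 n th (u v w : 'I_(3 * n)) : kd u = 0 -> kd v = 1 -> kd w = 2 ->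
  Fs th [:: u; v; w] = (Ff n + 5 * 4 ^ ix v - th u v) + (Ff n - th v w).
Proof.
by move=> Hu Hv Hw; rewrite /Fs /= !big_cons big_nil /= /fine Hu Hv Hw /= addn0.
Qed.

Lemma F2Z n th (u w : 'I_(3 * n)) : kd u = 0 -> kd w = 2 -> th u w = 0 ->
  Fs th [:: u; w] = 2 * Ff n.
Proof.
by move=> Hu Hw Ht; rewrite /Fs /= !big_cons big_nil /= /fine Hu Hw /= Ht addn0 subn0.
Qed.

Lemma sub_Z n (i0 j0 k0 : 'I_n) (u w : 'I_(3 * n)) : kd u = 0 -> kd w = 2 -> sub i0 j0 k0 u w = 0.
Proof. by move=> Hu Hw; rewrite /sub Hu Hw. Qed.

Lemma pert3 n (i0 j0 k0 : 'I_n) (u v w : 'I_(3 * n)) :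
  kd u = 0 -> kd v = 1 -> kd w = 2 -> [:: u; v; w] != tgt i0 j0 k0 ->
  Fs (zth n) [:: u; v; w] = 2 * Ff n + 5 * 4 ^ ix v /\
  exists d, Fs (sub i0 j0 k0) [:: u; v; w] + d = Fs (zth n) [:: u; v; w] /\
     (d = 0 \/ (d = 3 * 4 ^ ix v /\ ix v = j0)).
Proof.
move=> Hu Hv Hw Hne.
rewrite !F3 //; split; first by rewrite /zth !subn0; tl.
have Hj0 : (4 ^ j0 <= 4 ^ n)%N by rewrite leq_pexp2l // ltnW.
rewrite /sub Hu Hv Hw /= /zth !subn0.
case E1: (ix u == i0); case E2: (ix v == j0); case E3: (ix w == k0) => /=.
- exfalso; move/negP: Hne; apply.
  apply/eqP; congr [:: _; _; _]; apply: vert_eq; rewrite ?kd_mkv ?ix_mkv //; exact/eqP.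
all: try (by exists 0; split; [rewrite !subn0; tl|left]).
all: move/eqP: E2 => E2; rewrite E2.
all: exists (3 * 4 ^ j0); split; [rewrite /Ff; tl | right; split => //].
Qed.

Lemma pow4_sep a b : a <> b -> (4 * 4 ^ a <= 4 ^ b)%coq_nat \/ (4 * 4 ^ b <= 4 ^ a)%coq_nat.
Proof.
move=> H; case: (ltngtP a b) => Hab.
- by left; apply/ssrnat.leP; rewrite -expnS leq_pexp2l.
- by right; apply/ssrnat.leP; rewrite -expnS leq_pexp2l.
- by [].
Qed.

Lemma so_refl a c : same_ord a a c c.
Proof. by split; rewrite ?ltnn ?eqxx. Qed.

Lemma Cs1 n (u : 'I_(3 * n)) : Cs [:: u] = 0.
Proof. by rewrite /Cs /= big_nil. Qed.
Lemma Cs2 n (u v : 'I_(3 * n)) : Cs [:: u; v] = code u v.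
Proof. by rewrite /Cs /= big_cons big_nil addn0. Qed.
Lemma Cs3 n (u v w : 'I_(3 * n)) : kd u = 0 -> kd v = 1 -> kd w = 2 -> Cs [:: u; v; w] = code u w.
Proof. by move=> *; rewrite /Cs /= !big_cons big_nil addn0 code3. Qed.
Lemma Fs1 n th (u : 'I_(3 * n)) : Fs th [:: u] = 0.
Proof. by rewrite /Fs /= big_nil. Qed.

Lemma fine_same n (i0 j0 k0 : 'I_n) (p q : seq 'I_(3 * n)) :
  gpath (@ee n) p -> gpath (@ee n) q -> p != tgt i0 j0 k0 -> q != tgt i0 j0 k0 ->
  Cs p = Cs q ->
  same_ord (Fs (zth n) p) (Fs (zth n) q) (Fs (sub i0 j0 k0) p) (Fs (sub i0 j0 k0) q).
Proof.
move=> Hp Hq Hpt Hqt.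
have HF : Ff n = 3 * 4 ^ n by [].
move: Hp Hq Hpt Hqt.
move=> /gpath_cases [[u ->]|[[u [v [-> Huv]]]|[u [v [w [-> [Hu Hv Hw]]]]]]];
move=> /gpath_cases [[u' ->]|[[u' [v' [-> Huv']]]|[u' [v' [w' [-> [Hu' Hv' Hw']]]]]]] Hpt Hqt;
  rewrite ?Cs1 ?Cs2 ?Cs3 //.
- by move=> _; rewrite ?Fs1; apply: so_refl.
- by move=> E; have := code_pos Huv'; rewrite -E.
- by move=> E; have := code_pos (u := u') (v := w'); rewrite -E Hu' Hw' => /(_ isT).
- by move=> E; have := code_pos Huv; rewrite E.
- by move=> /(code_inj Huv Huv') [-> ->]; apply: so_refl.
- move=> /(code_inj Huv) []; first by rewrite Hu' Hw'.
  move=> e1 e2; subst u' w'.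
  rewrite F2Z // F2Z //; last exact: sub_Z.
  have [E0 [d [Hd Hd']]] := pert3 Hu' Hv' Hw' Hqt.
  have H4 : (0 < 4 ^ ix v')%N by rewrite expn_gt0.
  rewrite E0 in Hd *; move: Hd; set X := Fs _ _ => Hd.
  apply: so_intro; tl.
- by move=> E; have := code_pos (u := u) (v := w); rewrite E Hu Hw => /(_ isT).
- move=> E; have [e1 e2] := code_inj (u := u) (w := w) (u' := u') (w' := v') ltac:(by rewrite Hu Hw) Huv' E.
  subst u' v'.
  rewrite F2Z // F2Z //; last exact: sub_Z.
  have [E0 [d [Hd Hd']]] := pert3 Hu Hv Hw Hpt.
  have H4 : (0 < 4 ^ ix v)%N by rewrite expn_gt0.
  rewrite E0 in Hd *; move: Hd; set X := Fs _ _ => Hd.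
  apply: so_intro; tl.
- move=> E; have [e1 e2] := code_inj (u := u) (w := w) (u' := u') (w' := w') ltac:(by rewrite Hu Hw) ltac:(by rewrite Hu' Hw') E.
  subst u' w'.
  case: (boolP (ix v == ix v')) => Hvv.
  + have ev : v = v' by apply: vert_eq; [rewrite Hv Hv' | exact/eqP].
    by subst v'; apply: so_refl.
  have Hvv' : ix v <> ix v' by move/eqP: Hvv.
  have [E0 [d [Hd Hd']]] := pert3 Hu Hv Hw Hpt.
  have [E0' [d' [Hd2 Hd2']]] := pert3 Hu Hv' Hw Hqt.
  rewrite E0 in Hd *; rewrite E0' in Hd2 *.
  have H4 : (0 < 4 ^ ix v)%N by rewrite expn_gt0.
  have H4' : (0 < 4 ^ ix v')%N by rewrite expn_gt0.
  have Hsep := pow4_sep Hvv'.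
  have Hnb : d = 0 \/ d' = 0.
    case: Hd' => [|[_ e]]; first by left.
    case: Hd2' => [|[_ e']]; first by right.
    by exfalso; apply: Hvv'; rewrite e e'.
  move: Hd Hd2; set X := Fs _ [:: u; v; w]; set Y := Fs _ [:: u; v'; w] => Hd Hd2.
  apply: so_intro; tl.
Qed.

Lemma lex_ne S x y a b : (a < S)%N -> (b < S)%N -> x <> y ->
  (S * x + a < S * y + b)%N = (x < y)%N /\ (S * x + a == S * y + b) = false.
Proof.
move=> Ha Hb Hxy.
have key : forall x y a b, (a < S)%N -> (x < y)%N -> (S * x + a < S * y + b)%N.
  move=> x1 y1 a1 b1 Ha1 Hl.
  have : (S * x1.+1 <= S * y1)%N by rewrite leq_mul2l Hl orbT.
  rewrite mulnS => H; tl.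
case: (ltngtP x y) => Hl.
- have := key x y a b Ha Hl => H; split => //; apply/negbTE; rewrite neq_ltn H.
  by [].
- have := key y x b a Hb Hl => H; split; first by apply/negbTE; rewrite -leqNgt ltnW.
  by apply/negbTE; rewrite neq_ltn H orbT.
- by [].
Qed.

Lemma so_add c a b a' b' : same_ord a b a' b' -> same_ord (c + a) (c + b) (c + a') (c + b').
Proof. by case=> H1 H2; split; rewrite ?ltn_add2l ?eqn_add2l. Qed.

Lemma sign_nat n (i0 j0 k0 : 'I_n) (p q : seq 'I_(3 * n)) :
  gpath (@ee n) p -> gpath (@ee n) q -> p != tgt i0 j0 k0 -> q != tgt i0 j0 k0 ->
  same_ord (Wn (zth n) p) (Wn (zth n) q) (Wn (sub i0 j0 k0) p) (Wn (sub i0 j0 k0) q).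
Proof.
move=> Hp Hq Hpt Hqt; rewrite !Wn_split.
case: (eqVneq (Cs p) (Cs q)) => E.
- rewrite E; apply: so_add; exact: fine_same.
- have E' : Cs p <> Cs q by apply/eqP.
  have [a1 a2] := lex_ne (Fs_lt (zth n) Hp) (Fs_lt (zth n) Hq) E'.
  have [b1 b2] := lex_ne (Fs_lt (sub i0 j0 k0) Hp) (Fs_lt (sub i0 j0 k0) Hq) E'.
  by split; rewrite ?a1 ?b1 ?a2 ?b2.
Qed.

Definition wR (R : realFieldType) n (th : 'I_(3 * n) -> 'I_(3 * n) -> nat) :
  'I_(3 * n) -> 'I_(3 * n) -> R := fun u v => ((wn th u v)%:R)%R.

Lemma pw_R (R : realFieldType) n th (p : seq 'I_(3 * n)) :
  pweight (wR R th) p = ((Wn th p)%:R)%R.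
Proof. by rewrite /pweight /Wn natr_sum. Qed.

Lemma cmp_same (R : realFieldType) a b c d : same_ord a b c d ->
  cmpR (a%:R : R) b%:R = cmpR (c%:R : R) d%:R.
Proof. by case=> H1 H2; rewrite /cmpR !ltr_nat !eqr_nat H1 H2. Qed.

Lemma le_same (R : realFieldType) a b c d : same_ord a b c d ->
  ((a%:R : R) <= b%:R)%R = ((c%:R : R) <= d%:R)%R.
Proof. by case=> H1 H2; rewrite !ler_nat (leq_eqVlt a) (leq_eqVlt c) H1 H2. Qed.

Ltac tl2 := intros;
  repeat match goal with
  | H : is_true (leq _ _) |- _ => move/ssrnat.leP: H => H
  | H : is_true (_ == _ :> nat) |- _ => move/eqP: H => H
  | H : is_true (~~ (_ == _ :> nat)) |- _ => move/eqP: H => H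
  end;
  try (apply/ssrnat.leP); try (match goal with |- is_true (_ == _) => apply/eqP end);
  repeat match goal with
  | H : context [muln _ _] |- _ => revert H; progress (rewrite -?multE -?plusE -?minusE); intro H
  | H : context [addn _ _] |- _ => revert H; progress (rewrite -?multE -?plusE -?minusE); intro H
  | H : context [subn _ _] |- _ => revert H; progress (rewrite -?multE -?plusE -?minusE); intro H
  end;
  rewrite -?multE -?plusE -?minusE; lia.

Lemma allseqs_mem (V : finType) k (s : seq V) : (size s <= k)%N -> s \in allseqs V k.
Proof.
elim: k s => [|k IH] [|x s] //= Hs.
rewrite in_cons; apply/orP; right.
apply: (allpairs_f (fun x s => x :: s)); first by rewrite mem_enum.
exact: IH.
Qed.

Lemma hist_eq (R : realFieldType) (V : Type) (A : strategy V) (w1 w2 : V -> V -> R) k :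
  (forall i, (i < k)%N -> forall p q, A (hist A w1 i) = Ask p q ->
     cmpR (pweight w1 p) (pweight w1 q) = cmpR (pweight w2 p) (pweight w2 q)) ->
  forall i, (i <= k)%N -> hist A w2 i = hist A w1 i.
Proof.
move=> H; elim=> [|i IH] Hi //=.
have Hik : (i < k)%N by [].
rewrite IH; last exact: ltnW.
case E: (A (hist A w1 i)) => [p q|b] //.
by rewrite (H i Hik p q E).
Qed.

Lemma halts_uniq (R : realFieldType) (V : Type) (A : strategy V) (w : V -> V -> R) k b k' b' :
  halts_with A w k b -> halts_with A w k' b' -> b = b'.
Proof.
move=> [H1 E1] [H2 E2].
case: (ltngtP k k') => Hk.
- by have [p [q E]] := H2 _ Hk; rewrite E in E1.
- by have [p [q E]] := H1 _ Hk; rewrite E in E2.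
- by subst; rewrite E1 in E2; case: E2.
Qed.

Lemma mkv_inj n l l' (x x' : 'I_n) : mkv l x = mkv l' x' -> (l : nat) = l' /\ (x : nat) = x'.
Proof. by move=> E; rewrite -(kd_mkv l x) -(ix_mkv l x) E kd_mkv ix_mkv. Qed.

Lemma ac_paths n (i0 k0 : 'I_n) (q : seq 'I_(3 * n)) :
  gpath_st (@ee n) (mkv l0 i0) (mkv l2 k0) q ->
  q = [:: mkv l0 i0; mkv l2 k0] \/ exists v, kd v = 1 /\ q = [:: mkv l0 i0; v; mkv l2 k0].
Proof.
case/and3P => Hg /eqP Hh /eqP Hl.
case: (gpath_cases Hg) => [[u E]|[[u [v [E _]]]|[u [v [w [E [Hu Hv Hw]]]]]]]; subst q => /=.
- move: Hh Hl => /= -> E; have := f_equal (@kd n) E; rewrite !kd_mkv //.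
- by move: Hh Hl => /= -> ->; left.
- by move: Hh Hl => /= -> ->; right; exists v.
Qed.

Lemma cand_mem n (p : seq 'I_(3 * n)) : (size p <= 3)%N -> (0 < n)%N -> p \in candidates 'I_(3 * n).
Proof.
move=> Hs Hn; apply: allseqs_mem; rewrite card_ord; apply: (leq_trans Hs).
by rewrite -{1}(muln1 3) leq_mul2l.
Qed.

Lemma gpath_ac n (i0 k0 : 'I_n) : gpath_st (@ee n) (mkv l0 i0) (mkv l2 k0) [:: mkv l0 i0; mkv l2 k0].
Proof.
rewrite /gpath_st /gpath /= !eqxx /= andbT /ee !kd_mkv /= andbT inE.
apply/eqP => /mkv_inj [] //.
Qed.

Lemma gpath_t n (i0 j0 k0 : 'I_n) : gpath_st (@ee n) (mkv l0 i0) (mkv l2 k0) (tgt i0 j0 k0).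
Proof.
rewrite /gpath_st /gpath /tgt /= !eqxx /= !andbT /ee !kd_mkv /= !inE.
apply/andP; split; [apply/norP; split|]; apply/eqP => /mkv_inj [] //.
Qed.

Lemma W_ac n th (i0 k0 : 'I_n) : th (mkv l0 i0) (mkv l2 k0) = 0 ->
  Wn th [:: mkv l0 i0; mkv l2 k0] = Sc n * code (mkv l0 i0) (mkv l2 k0) + 2 * Ff n.
Proof. by move=> H; rewrite Wn_split Cs2 F2Z // kd_mkv. Qed.

Lemma W_avc n th (i0 k0 : 'I_n) v : kd v = 1 ->
  Wn th [:: mkv l0 i0; v; mkv l2 k0] = Sc n * code (mkv l0 i0) (mkv l2 k0) +
    ((Ff n + 5 * 4 ^ ix v - th (mkv l0 i0) v) + (Ff n - th v (mkv l2 k0))).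
Proof. by move=> H; rewrite Wn_split Cs3 ?F3 // kd_mkv. Qed.

Lemma sub_ab n (i0 j0 k0 : 'I_n) : sub i0 j0 k0 (mkv l0 i0) (mkv l1 j0) = 3 * 4 ^ j0.
Proof. by rewrite /sub !kd_mkv !ix_mkv !eqxx. Qed.
Lemma sub_bc n (i0 j0 k0 : 'I_n) : sub i0 j0 k0 (mkv l1 j0) (mkv l2 k0) = 3 * 4 ^ j0.
Proof. by rewrite /sub !kd_mkv !ix_mkv !eqxx. Qed.
Lemma sub_av n (i0 j0 k0 : 'I_n) v : kd v = 1 -> v <> mkv l1 j0 ->
  sub i0 j0 k0 (mkv l0 i0) v = 0 /\ sub i0 j0 k0 v (mkv l2 k0) = 0.
Proof.
move=> Hv Hne.
have Hj : ix v != j0.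
  apply/eqP => E; apply: Hne; apply: vert_eq; by rewrite ?kd_mkv ?ix_mkv.
by rewrite /sub !kd_mkv Hv (negbTE Hj) /= !andbF.
Qed.
Lemma sub_Zac n (i0 j0 k0 : 'I_n) : sub i0 j0 k0 (mkv l0 i0) (mkv l2 k0) = 0.
Proof. by rewrite /sub !kd_mkv. Qed.

Lemma short0 (R : realFieldType) n (i0 k0 : 'I_n) q :
  is_shortest (@ee n) (wR R (zth n)) (mkv l0 i0) (mkv l2 k0) q ->
  q = [:: mkv l0 i0; mkv l2 k0].
Proof.
have Hn := npos (mkv l0 i0).
case/andP => Hq /allP Hall.
case: (ac_paths Hq) => [//|[v [Hv E]]]; subst q.
have := Hall _ (cand_mem (p := [:: mkv l0 i0; mkv l2 k0]) isT Hn).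
rewrite gpath_ac /= !pw_R ler_nat W_ac // W_avc // /zth !subn0.
have : (0 < 4 ^ ix v)%N by rewrite expn_gt0.
move=> H1 H2; exfalso; move: H1 H2; move: (Sc n * _) => C; clear Hall Hq; tl2.
Qed.

Lemma shortt (R : realFieldType) n (i0 j0 k0 : 'I_n) q :
  is_shortest (@ee n) (wR R (sub i0 j0 k0)) (mkv l0 i0) (mkv l2 k0) q = (q == tgt i0 j0 k0).
Proof.
have Hn := npos (mkv l0 i0).
have Hj : (3 * 4 ^ j0 <= Ff n)%N by rewrite /Ff leq_mul2l leq_pexp2l // ltnW.
have Hx : (0 < 4 ^ j0)%N by rewrite expn_gt0.
have Wt : Wn (sub i0 j0 k0) (tgt i0 j0 k0) = Sc n * code (mkv l0 i0) (mkv l2 k0) +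
    ((Ff n + 5 * 4 ^ j0 - 3 * 4 ^ j0) + (Ff n - 3 * 4 ^ j0)).
  by rewrite /tgt W_avc ?kd_mkv // sub_ab sub_bc ix_mkv.
apply/idP/eqP.
- case/andP => Hq /allP Hall.
  have := Hall _ (cand_mem (p := tgt i0 j0 k0) isT Hn).
  rewrite gpath_t /= !pw_R ler_nat Wt.
  case: (ac_paths Hq) => [->|[v [Hv E]]].
  + rewrite W_ac ?sub_Zac //; move: (Sc n * _) => C H; exfalso; move: H; clear Wt Hall Hq; tl2.
  + subst q; case: (eqVneq v (mkv l1 j0)) => [->//|Hne].
    have [s1 s2] := sub_av i0 k0 Hv (elimN eqP Hne).
    rewrite W_avc // s1 s2 !subn0.
    have : (0 < 4 ^ ix v)%N by rewrite expn_gt0.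
    move: (Sc n * _) => C H1 H2; exfalso; move: H1 H2; clear Wt Hall; tl2.
- move=> ->; rewrite /is_shortest gpath_t /=; apply/allP => q' _; apply/implyP => Hq'.
  rewrite !pw_R ler_nat Wt.
  case: (ac_paths Hq') => [->|[v [Hv ->]]].
  + rewrite W_ac ?sub_Zac //; move: (Sc n * _) => C; clear Wt Hq'; tl2.
  + case: (eqVneq v (mkv l1 j0)) => [->|Hne].
    * by rewrite -Wt.
    have [s1 s2] := sub_av i0 k0 Hv (elimN eqP Hne).
    rewrite W_avc // s1 s2 !subn0.
    have : (0 < 4 ^ ix v)%N by rewrite expn_gt0.
    move: (Sc n * _) => C; clear Wt Hq'; tl2.
Qed.

Lemma gst_t n (i0 j0 k0 : 'I_n) s u : gpath_st (@ee n) s u (tgt i0 j0 k0) -> s = mkv l0 i0 /\ u = mkv l2 k0.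
Proof. by case/and3P => _ /eqP <- /eqP <-. Qed.

Lemma short_eq (R : realFieldType) n (i0 j0 k0 : 'I_n) s u p :
  ~ (s = mkv l0 i0 /\ u = mkv l2 k0) ->
  is_shortest (@ee n) (wR R (zth n)) s u p = is_shortest (@ee n) (wR R (sub i0 j0 k0)) s u p.
Proof.
move=> H; rewrite /is_shortest.
case Hp: (gpath_st (@ee n) s u p) => //=.
have Hpt : p != tgt i0 j0 k0.
  by apply/eqP => E; subst p; apply: H; apply: gst_t Hp.
apply: eq_all => q.
case Hq: (gpath_st (@ee n) s u q) => //=.
have Hqt : q != tgt i0 j0 k0.
  by apply/eqP => E; subst q; apply: H; apply: gst_t Hq.
rewrite !pw_R; apply: le_same; apply: sign_nat => //.
- by case/and3P: Hp.
- by case/and3P: Hq.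
Qed.

Lemma nsp_eq (R : realFieldType) n (i0 j0 k0 : 'I_n) s u :
  ~ (s = mkv l0 i0 /\ u = mkv l2 k0) ->
  nsp (@ee n) (wR R (zth n)) s u = nsp (@ee n) (wR R (sub i0 j0 k0)) s u.
Proof. by move=> H; apply: eq_count => p; rewrite (short_eq R j0 _ H). Qed.

Lemma nspv_eq (R : realFieldType) n (i0 j0 k0 : 'I_n) s u v :
  ~ (s = mkv l0 i0 /\ u = mkv l2 k0) ->
  nsp_via (@ee n) (wR R (zth n)) s u v = nsp_via (@ee n) (wR R (sub i0 j0 k0)) s u v.
Proof. by move=> H; apply: eq_count => p; rewrite (short_eq R j0 _ H). Qed.

Lemma nsp_t_pos (R : realFieldType) n (i0 j0 k0 : 'I_n) :
  (0 < nsp (@ee n) (wR R (sub i0 j0 k0)) (mkv l0 i0) (mkv l2 k0))%N.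
Proof.
have Hn := npos (mkv l0 i0).
rewrite /nsp -has_count; apply/hasP; exists (tgt i0 j0 k0).
- exact: cand_mem.
- by rewrite shortt.
Qed.

Lemma nspv_t (R : realFieldType) n (i0 j0 k0 : 'I_n) :
  nsp_via (@ee n) (wR R (sub i0 j0 k0)) (mkv l0 i0) (mkv l2 k0) (mkv l1 j0) =
  nsp (@ee n) (wR R (sub i0 j0 k0)) (mkv l0 i0) (mkv l2 k0).
Proof.
apply: eq_count => p; rewrite shortt.
case: eqP => [->|_] //=.
by rewrite /tgt !inE eqxx orbT.
Qed.

Lemma nspv_0 (R : realFieldType) n (i0 j0 k0 : 'I_n) :
  nsp_via (@ee n) (wR R (zth n)) (mkv l0 i0) (mkv l2 k0) (mkv l1 j0) = 0.
Proof.
apply/eqP; rewrite -leqn0 leqNgt -has_count; apply/hasPn => p _.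
apply/negP => /andP [/short0 -> Hb].
move: Hb; rewrite !inE => /orP [] /eqP /mkv_inj [] //.
Qed.

Open Scope ring_scope.

Lemma BC_diff (R : realFieldType) n (i0 j0 k0 : 'I_n) :
  BC (@ee n) (wR R (sub i0 j0 k0)) (mkv l1 j0) = BC (@ee n) (wR R (zth n)) (mkv l1 j0) + 1.
Proof.
set a := mkv l0 i0; set b := mkv l1 j0; set c := mkv l2 k0.
have Hab : a != b by apply/eqP => /mkv_inj [].
have Hcb : c != b by apply/eqP => /mkv_inj [].
rewrite /BC (bigD1 a) //= [X in _ = X + _](bigD1 a) //=.
have Erest : forall s, s != a ->
  \sum_(t | (t != b) && (0 < nsp (@ee n) (wR R (sub i0 j0 k0)) s t)%N)
     ((nsp_via (@ee n) (wR R (sub i0 j0 k0)) s t b)%:R / (nsp (@ee n) (wR R (sub i0 j0 k0)) s t)%:R) =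
  \sum_(t | (t != b) && (0 < nsp (@ee n) (wR R (zth n)) s t)%N)
     ((nsp_via (@ee n) (wR R (zth n)) s t b)%:R / (nsp (@ee n) (wR R (zth n)) s t)%:R) :> rat.
  move=> s Hsa.
  have H : forall t, ~ (s = a /\ t = c) by move=> t [E _]; rewrite E eqxx in Hsa.
  apply: eq_big => [t|t _]; first by rewrite (nsp_eq R j0 (H t)).
  by rewrite (nsp_eq R j0 (H t)) (nspv_eq R j0 _ (H t)).
rewrite (eq_bigr _ (fun s Hs => Erest s (proj2 (andP Hs)))).
rewrite -!addrA [X in _ = _ + X]addrC !addrA; congr (_ + _).
rewrite big_mkcond [X in _ = X + _]big_mkcond (bigD1 c) //= [X in _ = X + _](bigD1 c) //=.
have Hca : forall t, t != c -> ~ (a = a /\ t = c) by move=> t Ht [_ E]; rewrite E eqxx in Ht.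
rewrite (eq_bigr _ (fun t Ht => (_ : _ = (if (t != b) && (0 < nsp (@ee n) (wR R (zth n)) a t)%N then
     (nsp_via (@ee n) (wR R (zth n)) a t b)%:R / (nsp (@ee n) (wR R (zth n)) a t)%:R else 0)))).
- rewrite nsp_t_pos Hcb /= nspv_t divff; last by rewrite pnatr_eq0 -lt0n nsp_t_pos.
  by rewrite nspv_0 mul0r if_same add0r addrC.
- move=> t Ht.
  by rewrite (nsp_eq R j0 (Hca t Ht)) (nspv_eq R j0 _ (Hca t Ht)).
Qed.

Close Scope ring_scope.

Definition getask (V : Type) (s : step V) : seq (seq V) :=
  match s with Ask p q => [:: p; q] | Answer _ => [::] end.

Lemma size_asks (V : Type) (f : nat -> step V) (s : seq nat) :
  (size (flatten [seq getask (f i) | i <- s]) <= 2 * size s)%N.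
Proof.
elim: s => [|x s IH] //=.
rewrite size_cat mulnS; apply: leq_add => //.
by case: (f x).
Qed.

Lemma pos_wR (R : realFieldType) n th : pos_weight (@ee n) (wR R th).
Proof.
move=> u v Huv; rewrite /wR ltr0n /wn.
have := code_pos Huv => H.
have : (0 < Sc n * code u v)%N by rewrite muln_gt0 expn_gt0 H.
by move=> H2; apply: (leq_trans H2); rewrite leq_addr.
Qed.

Definition tgt3 n (x : 'I_n * 'I_n * 'I_n) := tgt x.1.1 x.1.2 x.2.

Lemma tgt3_inj n : injective (@tgt3 n).
Proof.
move=> [[i j] k] [[i' j'] k']; rewrite /tgt3 /tgt /= => [[]].
by move=> /addnI /val_inj -> /addnI /val_inj -> /addnI /val_inj ->.
Qed.

Unset Implicit Arguments.

Theorem theorem2p1 (R : realFieldType) (n : nat) (hn : (1 <= n)%N) :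
  exists e : rel 'I_(3 * n),
    (forall x, ~~ e x x) /\
    forall A : strategy 'I_(3 * n),
      compares_paths R e A -> computes_BC R e A ->
      exists w : 'I_(3 * n) -> 'I_(3 * n) -> R,
        pos_weight e w /\
        forall k b, halts_with A w k b -> (n ^ 3 <= 2 * k)%N.
Proof.
exists (@ee n); split; first by move=> x; rewrite /ee ltnn.
move=> A Hcmp Hbc.
exists (wR R (zth n)); split; first exact: pos_wR.
move=> k bb Hh.
rewrite leqNgt; apply/negP => Hlt.
pose L := flatten [seq getask (A (hist A (wR R (zth n)) i)) | i <- iota 0 k].
have HL : (size L <= 2 * k)%N by have := size_asks (fun i => A (hist A (wR R (zth n)) i)) (iota 0 k); rewrite size_iota.
pose T := [seq tgt3 x | x <- enum {: 'I_n * 'I_n * 'I_n}].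
have HT : size T = n ^ 3 by rewrite size_map -cardE !card_prod !card_ord expnS expnS expn1 mulnA.
have [x Hx] : exists x, tgt3 x \notin L.
  apply/existsP; rewrite -negb_forall; apply/negP => /forallP Hall.
  have : (size T <= size L)%N.
    apply: uniq_leq_size; first by rewrite map_inj_uniq ?enum_uniq //; exact: tgt3_inj.
    by move=> p /mapP [y _ ->]; apply: Hall.
  by rewrite HT => H; move: (leq_trans H HL); rewrite leqNgt Hlt.
move: x Hx => [[i0 j0] k0]; rewrite /tgt3 /= => Hx.
have Hnot : forall p, p \in L -> p != tgt i0 j0 k0.
  by move=> p Hp; apply/eqP => E; move: Hx; rewrite -E Hp.
have Hhist : forall i, (i <= k)%N -> hist A (wR R (sub i0 j0 k0)) i = hist A (wR R (zth n)) i.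
  apply: hist_eq => i Hi p q E.
  have Hp : p \in L by apply/flatten_mapP; exists i; [rewrite mem_iota | rewrite E !inE eqxx].
  have Hq : q \in L by apply/flatten_mapP; exists i; [rewrite mem_iota | rewrite E !inE eqxx orbT].
  have [gp gq _] := Hcmp _ (pos_wR R (zth n)) i p q E.
  rewrite !pw_R; apply: cmp_same; apply: sign_nat => //; exact: Hnot.
have Hht : halts_with A (wR R (sub i0 j0 k0)) k bb.
  case: Hh => H1 H2; split.
  - by move=> i Hi; rewrite Hhist; [exact: H1 | exact: ltnW].
  - by rewrite Hhist.
have [k1 [b1 [Hh1 Hb1]]] := Hbc _ (pos_wR R (zth n)).
have [k2 [b2 [Hh2 Hb2]]] := Hbc _ (pos_wR R (sub i0 j0 k0)).
have e1 := halts_uniq Hh Hh1; have e2 := halts_uniq Hht Hh2.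
have := Hb1 (mkv l1 j0); have := Hb2 (mkv l1 j0).
rewrite -e1 -e2 BC_diff => -> E.
move: E; set X := BC _ _ _ => E.
have : (1 : rat) = 0%R by apply: (@addrI _ X); rewrite addr0.
by move/eqP; rewrite oner_eq0.
Qed.
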